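(* For all $t\in\mathbb N$ and real $\vartheta$ we have $S_{2t}(\vartheta)=D_0(\vartheta)S_t(\vartheta)$ and $S_{2t+1}(\vartheta)=D_1(\vartheta)S_t(\vartheta)$, with \[ S_0(\vartheta)=\Bigl(1,\ 1,\ \tfrac{\mathrm e(\vartheta)+1}{2},\ \tfrac{\mathrm e(\vartheta)+1}{2(2-\mathrm e(-\vartheta))},\ \tfrac{3\mathrm e(\vartheta)+2-\mathrm e(-\vartheta)}{4(2-\mathrm e(-\vartheta))},\ \tfrac{2\mathrm e(2\vartheta)+\mathrm e(\vartheta)+\mathrm e(-\vartheta)}{4(2-\mathrm e(-\vartheta))}\Bigr)^T. \] In particular, $\alpha_{8t}=\alpha_{4t}=\beta_{8t}=\beta_{4t}$ for all $t\in\mathbb N$.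
   Context: Let $\mathsf r(n)$ be the number of (overlapping) occurrences of $\mathtt{11}$ in the binary expansion of $n\in\mathbb N=\{0,1,\dots\}$, and $d(t,n)=\mathsf r(n+t)-\mathsf r(n)$. Let $a_t(k)$, $b_t(k)$ be the asymptotic densities (which exist) of $\{n\in\mathbb N:d(t,2n)=k\}$ and $\{n\in\mathbb N:d(t,2n+1)=k\}$ respectively. Write $\mathrm e(\vartheta)=\exp(i\vartheta)$ and define $\alpha_t(\vartheta)=\sum_{k\in\mathbb Z}a_t(k)\mathrm e(k\vartheta)$, $\beta_t(\vartheta)=\sum_{k\in\mathbb Z}b_t(k)\mathrm e(k\vartheta)$, and $S_t(\vartheta)=(\alpha_{2t}(\vartheta),\beta_{2t}(\vartheta),\alpha_{2t+1}(\vartheta),\beta_{2t+1}(\vartheta),\alpha_{2t+2}(\vartheta),\beta_{2t+2}(\vartheta))^T\in\mathbb C^6$. With $x=\mathrm e(\vartheta)$, define the $6\times6$ matrices \[ D_0(\vartheta)=\frac12\begin{pmatrix}1&1&0&0&0&0\\1&1&0&0&0&0\\1&x&0&0&0&0\\0&0&1&x^{-1}&0&0\\0&0&1&1&0&0\\0&0&x&x^{-1}&0&0\end{pmatrix},\quad D_1(\vartheta)=\frac12\begin{pmatrix}0&0&1&1&0&0\\0&0&x&x^{-1}&0&0\\0&0&x&1&0&0\\0&0&0&0&1&x^{-1}\\0&0&0&0&1&1\\0&0&0&0&1&1\end{pmatrix}. \] *)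

(* Defs.v *)
From Stdlib Require Import Reals ZArith List Lia Lra.
From Coquelicot Require Import Coquelicot.
Import ListNotations.

(* r n : number of (overlapping) occurrences of "11" in the binary expansion
   of n, i.e. the number of positions i with bits i and i+1 of n both 1.
   Bits at positions >= n are 0 (n < 2^n), so scanning i in [0, n] suffices. *)
Definition r (n : nat) : nat :=
  length (filter (fun i => andb (Nat.testbit n i) (Nat.testbit n (S i))) (seq 0 (S n))).

Definition d (t n : nat) : Z := (Z.of_nat (r (n + t)) - Z.of_nat (r n))%Z.

Definition cnt (P : nat -> bool) (N : nat) : nat := length (filter P (seq 0 N)).

Definition density (P : nat -> bool) : R :=
  real (Lim_seq (fun N => (INR (cnt P N) / INR N)%R)).

Definition a (t : nat) (k : Z) : R := density (fun n => Z.eqb (d t (2 * n)) k).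
Definition b (t : nat) (k : Z) : R := density (fun n => Z.eqb (d t (2 * n + 1)) k).

Definition e (th : R) : Complex.C := (cos th, sin th).

Definition Zsum (g : Z -> R) : R :=
  (Series (fun n => g (Z.of_nat n)) + Series (fun n => g (- Z.of_nat (S n))%Z))%R.

Definition fourier (c : Z -> R) (th : R) : Complex.C :=
  (Zsum (fun k => c k * cos (IZR k * th)), Zsum (fun k => c k * sin (IZR k * th)))%R.

Definition alpha (t : nat) (th : R) : Complex.C := fourier (a t) th.
Definition beta (t : nat) (th : R) : Complex.C := fourier (b t) th.

Open Scope C_scope.

Definition S (t : nat) (th : R) (i : nat) : Complex.C :=
  match i with
  | 0 => alpha (2 * t) th
  | 1 => beta (2 * t) th
  | 2 => alpha (2 * t + 1) th
  | 3 => beta (2 * t + 1) th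
  | 4 => alpha (2 * t + 2) th
  | _ => beta (2 * t + 2) th
  end.

Definition half_mx (rows : list (list Complex.C)) (i j : nat) : Complex.C :=
  / RtoC 2 * nth j (nth i rows []) (RtoC 0).

Definition D0 (th : R) : nat -> nat -> Complex.C :=
  let x := e th in let o := RtoC 0 in let l := RtoC 1 in
  half_mx [ [l; l; o; o; o; o];
            [l; l; o; o; o; o];
            [l; x; o; o; o; o];
            [o; o; l; /x; o; o];
            [o; o; l; l; o; o];
            [o; o; x; /x; o; o] ].

Definition D1 (th : R) : nat -> nat -> Complex.C :=
  let x := e th in let o := RtoC 0 in let l := RtoC 1 in
  half_mx [ [o; o; l; l; o; o];
            [o; o; x; /x; o; o];
            [o; o; x; l; o; o];
            [o; o; o; o; l; /x];
            [o; o; o; o; l; l];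
            [o; o; o; o; l; l] ].

Definition mv (M : nat -> nat -> Complex.C) (v : nat -> Complex.C) (i : nat) : Complex.C :=
  M i 0%nat * v 0%nat + M i 1%nat * v 1%nat + M i 2%nat * v 2%nat
  + M i 3%nat * v 3%nat + M i 4%nat * v 4%nat + M i 5%nat * v 5%nat.

Definition S0_explicit (th : R) (i : nat) : Complex.C :=
  let x := e th in let y := e (- th) in
  match i with
  | 0 => RtoC 1
  | 1 => RtoC 1
  | 2 => (x + RtoC 1) / RtoC 2
  | 3 => (x + RtoC 1) / (RtoC 2 * (RtoC 2 - y))
  | 4 => (RtoC 3 * x + RtoC 2 - y) / (RtoC 4 * (RtoC 2 - y))
  | _ => (RtoC 2 * e (2 * th) + x + y) / (RtoC 4 * (RtoC 2 - y))
  end.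

(* Main.v *)
Require Import Defs.
From Stdlib Require Import Reals ZArith Lia Lra List.
From Coquelicot Require Import Coquelicot.
Import ListNotations.

Definition pr (n i : nat) : bool := andb (Nat.testbit n i) (Nat.testbit n (Datatypes.S i)).
Definition cntb (n L : nat) : nat := length (filter (pr n) (seq 0 L)).

Lemma cntb_stable n L : (Datatypes.S n <= L)%nat -> cntb n L = cntb n (Datatypes.S n).
Proof.
  induction L as [|L IH]; intros H; [lia|].
  destruct (Nat.eq_dec L n) as [->|Hne]; [reflexivity|].
  unfold cntb in *. rewrite seq_S, filter_app, length_app. cbn [filter Nat.add].
  assert (pr n L = false) as ->.
  { unfold pr. rewrite (Nat.bits_above_log2 n L); [reflexivity|].
    pose proof (Nat.log2_le_lin n (Nat.le_0_l n)). lia. }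
  rewrite IH by lia. simpl. lia.
Qed.

Lemma r_cntb n : r n = cntb n (Datatypes.S n).
Proof. reflexivity. Qed.

Lemma cntb_shift m L : cntb m (Datatypes.S L) = ((if pr m 0 then 1 else 0) +
   length (filter (fun i => pr m (Datatypes.S i)) (seq 0 L)))%nat.
Proof.
  unfold cntb. rewrite <- cons_seq. cbn [filter]. rewrite <- seq_shift, filter_map_swap.
  destruct (pr m 0); cbn [length]; rewrite length_map; reflexivity.
Qed.

Lemma r_even q : r (2 * q) = r q.
Proof.
  destruct q as [|q]; [reflexivity|].
  rewrite !r_cntb, cntb_shift.
  assert (pr (2 * Datatypes.S q) 0 = false) as ->.
  { unfold pr. rewrite Nat.testbit_even_0. reflexivity. }
  assert (forall L, length (filter (fun i => pr (2 * Datatypes.S q) (Datatypes.S i)) (seq 0 L)) = cntb (Datatypes.S q) L) as E.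
  { intro L. unfold cntb. f_equal. apply filter_ext. intro i. unfold pr.
    rewrite !Nat.testbit_even_succ by lia. reflexivity. }
  rewrite E. simpl (0 + _)%nat. apply cntb_stable. lia.
Qed.

Lemma r_odd q : r (2 * q + 1) = (r q + if Nat.odd q then 1 else 0)%nat.
Proof.
  rewrite !r_cntb.
  replace (Datatypes.S (2 * q + 1)) with (Datatypes.S (2*q+1)) by reflexivity.
  rewrite cntb_shift.
  assert (pr (2 * q + 1) 0 = Nat.odd q) as ->.
  { unfold pr. rewrite Nat.testbit_odd_0.
    pose proof (Nat.testbit_odd_succ q 0 (Nat.le_0_l 0)) as T. change (Nat.succ 0) with 1%nat in T. rewrite T.
    rewrite Nat.bit0_odd. reflexivity. }
  assert (forall L, length (filter (fun i => pr (2 * q + 1) (Datatypes.S i)) (seq 0 L)) = cntb q L) as E.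
  { intro L. unfold cntb. f_equal. apply filter_ext. intro i. unfold pr.
    rewrite !Nat.testbit_odd_succ by lia. reflexivity. }
  rewrite E. rewrite (cntb_stable q (2*q+1)) by lia. destruct (Nat.odd q); lia.
Qed.
Definition A (m n : nat) : Z := d m (2 * n).
Definition B (m n : nat) : Z := d m (2 * n + 1).
Definition par (u : nat) : Z := if Nat.odd u then 1%Z else 0%Z.

Lemma odd_2j j u : Nat.odd (2 * j + u) = Nat.odd u.
Proof. rewrite Nat.add_comm. apply Nat.odd_add_mul_2. Qed.
Lemma odd_2j1 j u : Nat.odd (2 * j + 1 + u) = negb (Nat.odd u).
Proof.
  replace (2 * j + 1 + u)%nat with (Datatypes.S u + 2 * j)%nat by lia.
  rewrite Nat.odd_add_mul_2, Nat.odd_succ, <- Nat.negb_odd. reflexivity.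
Qed.
Lemma odd_2 j : Nat.odd (2 * j) = false.
Proof. pose proof (odd_2j j 0). rewrite Nat.add_0_r in H. exact H. Qed.
Lemma odd_21 j : Nat.odd (2 * j + 1) = true.
Proof. pose proof (odd_2j1 j 0). rewrite Nat.add_0_r in H. exact H. Qed.

Ltac fin u := unfold par; rewrite ?odd_2j, ?odd_2j1, ?odd_2, ?odd_21;
  try (replace (Nat.odd 1) with true by reflexivity);
  destruct (Nat.odd u); simpl negb; cbv iota; lia.

Lemma A_even_e u j : A (2 * u) (2 * j) = A u j.
Proof. unfold A, d. replace (2 * (2 * j) + 2 * u)%nat with (2 * (2 * j + u))%nat by lia.
  rewrite !r_even. reflexivity. Qed.
Lemma A_even_o u j : A (2 * u) (2 * j + 1) = B u j.
Proof. unfold A, B, d. replace (2 * (2 * j + 1) + 2 * u)%nat with (2 * (2 * j + 1 + u))%nat by lia.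
  rewrite !r_even. reflexivity. Qed.
Lemma B_even_e u j : B (2 * u) (2 * j) = (A u j + par u)%Z.
Proof. unfold A, B, d. replace (2 * (2 * j) + 1 + 2 * u)%nat with (2 * (2 * j + u) + 1)%nat by lia.
  rewrite !r_odd. fin u. Qed.
Lemma B_even_o u j : B (2 * u) (2 * j + 1) = (B u j - par u)%Z.
Proof. unfold A, B, d. replace (2 * (2 * j + 1) + 1 + 2 * u)%nat with (2 * (2 * j + 1 + u) + 1)%nat by lia.
  rewrite !r_odd. fin u. Qed.
Lemma A_odd_e u j : A (2 * u + 1) (2 * j) = (A u j + par u)%Z.
Proof. unfold A, B, d. replace (2 * (2 * j) + (2 * u + 1))%nat with (2 * (2 * j + u) + 1)%nat by lia.
  rewrite r_odd, !r_even. fin u. Qed.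
Lemma A_odd_o u j : A (2 * u + 1) (2 * j + 1) = (B u j + (1 - par u))%Z.
Proof. unfold A, B, d. replace (2 * (2 * j + 1) + (2 * u + 1))%nat with (2 * (2 * j + 1 + u) + 1)%nat by lia.
  rewrite r_odd, !r_even. fin u. Qed.
Lemma B_odd_e u j : B (2 * u + 1) (2 * j) = A (u + 1) j.
Proof. unfold A, B, d. replace (2 * (2 * j) + 1 + (2 * u + 1))%nat with (2 * (2 * j + (u + 1)))%nat by lia.
  rewrite r_odd, !r_even. rewrite odd_2. lia. Qed.
Lemma B_odd_o u j : B (2 * u + 1) (2 * j + 1) = (B (u + 1) j - 1)%Z.
Proof. unfold A, B, d. replace (2 * (2 * j + 1) + 1 + (2 * u + 1))%nat with (2 * (2 * j + 1 + (u + 1)))%nat by lia.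
  rewrite r_odd, !r_even. rewrite odd_21. lia. Qed.

Lemma even_odd_lim (u : nat -> R) (l : R) :
  is_lim_seq (fun N => u (2 * N)%nat) l -> is_lim_seq (fun N => u (2 * N + 1)%nat) l ->
  is_lim_seq u l.
Proof.
  intros He Ho. apply is_lim_seq_spec in He. apply is_lim_seq_spec in Ho.
  apply is_lim_seq_spec. intro eps.
  destruct (He eps) as [N1 H1]. destruct (Ho eps) as [N2 H2].
  exists (2 * (N1 + N2))%nat. intros n Hn.
  destruct (Nat.Even_or_Odd n) as [[j ->]|[j ->]].
  - apply H1. lia.
  - apply H2. lia.
Qed.

Lemma inv_odd_lim : is_lim_seq (fun N => / INR (2 * N + 1)) 0.
Proof.
  replace (Finite 0) with (Rbar_inv p_infty) by reflexivity.
  apply is_lim_seq_inv; [|discriminate].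
  apply is_lim_seq_le_p_loc with (u := INR).
  - exists 0%nat. intros n _. apply le_INR. lia.
  - apply is_lim_seq_INR.
Qed.

Lemma lim_half (c g : nat -> R) (L : R) :
  (forall N, c (2 * N)%nat = g N) ->
  (forall N, 0 <= c (2 * N + 1)%nat - c (2 * N)%nat <= 1) ->
  is_lim_seq (fun N => g N / INR N) L ->
  is_lim_seq (fun n => c n / INR n) (L / 2).
Proof.
  intros Hc Hd HL. apply even_odd_lim.
  - apply is_lim_seq_ext with (u := fun N => / 2 * (g N / INR N)).
    + intro N. rewrite Hc, mult_INR. unfold Rdiv. rewrite Rinv_mult. replace (INR 2) with 2 by (simpl; ring). ring.
    + replace (L / 2) with (/ 2 * L) by (unfold Rdiv; ring).
      apply (is_lim_seq_scal_l _ (/2) L HL).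
  - pose (v := fun N => (g N / INR N) * (/ 2 - / 2 * / INR (2 * N + 1))
                        + (c (2 * N + 1)%nat - c (2 * N)%nat) * / INR (2 * N + 1)).
    apply is_lim_seq_ext_loc with (u := v).
    + exists 1%nat. intros N HN. unfold v. rewrite <- (Hc N).
      assert (INR N <> 0) by (apply not_0_INR; lia).
      assert (E: INR (2 * N + 1) = 2 * INR N + 1) by (rewrite plus_INR, mult_INR; simpl; ring).
      rewrite E. field. split; [pose proof (pos_INR N); lra | exact H].
    + assert (H1 : is_lim_seq (fun N => / 2 - / 2 * / INR (2 * N + 1)) (/ 2 - / 2 * 0)).
      { apply (is_lim_seq_minus' (fun _ => / 2) (fun N => / 2 * / INR (2 * N + 1))).
        - apply is_lim_seq_const.
        - apply (is_lim_seq_scal_l _ (/2) 0 inv_odd_lim). }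
      assert (H2 : is_lim_seq (fun N => (c (2 * N + 1)%nat - c (2 * N)%nat) * / INR (2 * N + 1)) 0).
      { apply is_lim_seq_le_le with (u := fun _ => 0) (w := fun N => / INR (2 * N + 1)).
        -- intro N. assert (0 < / INR (2 * N + 1)).
           { apply Rinv_0_lt_compat. apply lt_0_INR. lia. }
           specialize (Hd N). split; nra.
        -- apply is_lim_seq_const.
        -- apply inv_odd_lim. }
      pose proof (is_lim_seq_plus' _ _ _ _ (is_lim_seq_mult' _ _ _ _ HL H1) H2) as H3.
      replace (L / 2) with (L * (/ 2 - / 2 * 0) + 0) by (unfold Rdiv; ring).
      exact H3.
Qed.

Definition cntZ (F : nat -> Z) (k : Z) (N : nat) : nat := cnt (fun n => Z.eqb (F n) k) N.
Definition ratio (F : nat -> Z) (k : Z) (N : nat) : R := INR (cntZ F k N) / INR N.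
Definition CV (F : nat -> Z) : Prop := forall k, exists l : R, is_lim_seq (ratio F k) l.
Definition densF (F : nat -> Z) (k : Z) : R := density (fun n => Z.eqb (F n) k).

Lemma cnt_S P N : cnt P (Datatypes.S N) = (cnt P N + if P N then 1 else 0)%nat.
Proof.
  unfold cnt. rewrite seq_S, filter_app, length_app. cbn [filter Nat.add].
  destruct (P N); reflexivity.
Qed.

Lemma eqb_shift a c k : Z.eqb (a + c) k = Z.eqb a (k - c).
Proof. destruct (Z.eqb_spec (a + c) k), (Z.eqb_spec a (k - c)); lia. Qed.

Lemma cnt_split F G H c1 c2 k :
  (forall j, F (2 * j)%nat = (G j + c1)%Z) -> (forall j, F (2 * j + 1)%nat = (H j + c2)%Z) ->
  forall N, cntZ F k (2 * N) = (cntZ G (k - c1) N + cntZ H (k - c2) N)%nat.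
Proof.
  intros HG HH N. induction N as [|N IH]; [reflexivity|].
  unfold cntZ in *.
  replace (2 * Datatypes.S N)%nat with (Datatypes.S (Datatypes.S (2 * N))) by lia.
  rewrite !cnt_S, IH. replace (Datatypes.S (2 * N)) with (2 * N + 1)%nat by lia.
  rewrite HG, HH, !eqb_shift.
  destruct (Z.eqb (G N) (k - c1)), (Z.eqb (H N) (k - c2)); lia.
Qed.

Lemma split_k F G H c1 c2 k (lg lh : R) :
  (forall j, F (2 * j)%nat = (G j + c1)%Z) -> (forall j, F (2 * j + 1)%nat = (H j + c2)%Z) ->
  is_lim_seq (ratio G (k - c1)) lg -> is_lim_seq (ratio H (k - c2)) lh ->
  is_lim_seq (ratio F k) ((lg + lh) / 2).
Proof.
  intros HG HH Lg Lh. unfold ratio.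
  apply (lim_half (fun n => INR (cntZ F k n))
                  (fun N => INR (cntZ G (k - c1) N) + INR (cntZ H (k - c2) N))).
  - intro N. rewrite (cnt_split F G H c1 c2 k HG HH N), plus_INR. reflexivity.
  - intro N. unfold cntZ. replace (2 * N + 1)%nat with (Datatypes.S (2 * N)) by lia.
    rewrite cnt_S, plus_INR. destruct (Z.eqb (F (2 * N)%nat) k); simpl; lra.
  - apply is_lim_seq_ext with (u := fun N => ratio G (k - c1) N + ratio H (k - c2) N).
    + intro N. unfold ratio, Rdiv. ring.
    + apply is_lim_seq_plus'; assumption.
Qed.

Lemma dens_of F k (l : R) : is_lim_seq (ratio F k) l -> densF F k = l.
Proof.
  intro H. unfold densF, density.
  change (fun N : nat => INR (cnt (fun n : nat => Z.eqb (F n) k) N) / INR N) with (ratio F k).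
  rewrite (is_lim_seq_unique _ _ H). reflexivity.
Qed.

Lemma CV_split F G H c1 c2 :
  (forall j, F (2 * j)%nat = (G j + c1)%Z) -> (forall j, F (2 * j + 1)%nat = (H j + c2)%Z) ->
  CV G -> CV H -> CV F.
Proof.
  intros HG HH CG CH k. destruct (CG (k - c1)%Z) as [lg Lg]. destruct (CH (k - c2)%Z) as [lh Lh].
  exists ((lg + lh) / 2). eapply split_k; eauto.
Qed.

Lemma dens_split F G H c1 c2 k :
  (forall j, F (2 * j)%nat = (G j + c1)%Z) -> (forall j, F (2 * j + 1)%nat = (H j + c2)%Z) ->
  CV G -> CV H -> densF F k = (densF G (k - c1) + densF H (k - c2)) / 2.
Proof.
  intros HG HH CG CH. destruct (CG (k - c1)%Z) as [lg Lg]. destruct (CH (k - c2)%Z) as [lh Lh].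
  rewrite (dens_of _ _ _ Lg), (dens_of _ _ _ Lh). apply dens_of. eapply split_k; eauto.
Qed.

Lemma cnt_zero F k N : (forall n, F n <> k) -> cntZ F k N = 0%nat.
Proof.
  intro Hn. induction N as [|N IH]; [reflexivity|]. unfold cntZ in *. rewrite cnt_S, IH.
  destruct (Z.eqb_spec (F N) k); [exfalso; eapply Hn; eauto|reflexivity].
Qed.

Lemma lim_zero F k : (forall n, F n <> k) -> is_lim_seq (ratio F k) 0.
Proof.
  intro Hn. apply is_lim_seq_ext with (u := fun _ => 0); [|apply is_lim_seq_const].
  intro N. unfold ratio. rewrite cnt_zero by exact Hn. simpl. unfold Rdiv. ring.
Qed.

Lemma cnt_all F k N : (forall n, F n = k) -> cntZ F k N = N.
Proof.
  intro Hn. induction N as [|N IH]; [reflexivity|]. unfold cntZ in *. rewrite cnt_S, IH, Hn, Z.eqb_refl. lia.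
Qed.

Lemma lim_one F k : (forall n, F n = k) -> is_lim_seq (ratio F k) 1.
Proof.
  intro Hn. apply is_lim_seq_ext_loc with (u := fun _ => 1); [|apply is_lim_seq_const].
  exists 1%nat. intros N HN. unfold ratio. rewrite cnt_all by exact Hn. field.
  apply not_0_INR. lia.
Qed.

Lemma A0 n : A 0 n = 0%Z.
Proof. unfold A, d. rewrite Nat.add_0_r. lia. Qed.
Lemma B0 n : B 0 n = 0%Z.
Proof. unfold B, d. rewrite Nat.add_0_r. lia. Qed.

Lemma CV_const F c : (forall n, F n = c) -> CV F.
Proof.
  intros Hc k. destruct (Z.eq_dec c k) as [<-|Hne].
  - exists 1. apply lim_one. exact Hc.
  - exists 0. apply lim_zero. intro n. rewrite Hc. exact Hne.
Qed.

Lemma A1_le n : (A 1 n <= 1)%Z.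
Proof.
  destruct (Nat.Even_or_Odd n) as [[j ->]|[j ->]].
  - pose proof (A_odd_e 0 j) as E. change (2 * 0 + 1)%nat with 1%nat in E; change (0 + 1)%nat with 1%nat in E. rewrite E, A0. unfold par. simpl. lia.
  - pose proof (A_odd_o 0 j) as E. change (2 * 0 + 1)%nat with 1%nat in E; change (0 + 1)%nat with 1%nat in E. rewrite E, B0. unfold par. simpl. lia.
Qed.

Lemma B1_le n : (B 1 n <= 1)%Z.
Proof.
  induction n as [n IH] using lt_wf_ind.
  destruct (Nat.Even_or_Odd n) as [[j ->]|[j ->]].
  - pose proof (B_odd_e 0 j) as E. change (2 * 0 + 1)%nat with 1%nat in E; change (0 + 1)%nat with 1%nat in E. rewrite E. apply A1_le.
  - pose proof (B_odd_o 0 j) as E. change (2 * 0 + 1)%nat with 1%nat in E; change (0 + 1)%nat with 1%nat in E. rewrite E. specialize (IH j ltac:(lia)). lia.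
Qed.

Lemma CV_A1 : CV (A 1).
Proof.
  apply (CV_split _ (A 0) (B 0) 0 1).
  - intro j. pose proof (A_odd_e 0 j) as E. change (2 * 0 + 1)%nat with 1%nat in E; change (0 + 1)%nat with 1%nat in E. rewrite E. reflexivity.
  - intro j. pose proof (A_odd_o 0 j) as E. change (2 * 0 + 1)%nat with 1%nat in E; change (0 + 1)%nat with 1%nat in E. rewrite E. reflexivity.
  - apply (CV_const _ 0). apply A0.
  - apply (CV_const _ 0). apply B0.
Qed.

Lemma CV_B1 : CV (B 1).
Proof.
  assert (HG : forall j, B 1 (2 * j)%nat = (A 1 j + 0)%Z).
  { intro j. pose proof (B_odd_e 0 j) as E. change (2 * 0 + 1)%nat with 1%nat in E; change (0 + 1)%nat with 1%nat in E. rewrite E. lia. }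
  assert (HH : forall j, B 1 (2 * j + 1)%nat = (B 1 j + -1)%Z).
  { intro j. pose proof (B_odd_o 0 j) as E. change (2 * 0 + 1)%nat with 1%nat in E; change (0 + 1)%nat with 1%nat in E. rewrite E. lia. }
  assert (K : forall i : nat, exists l : R, is_lim_seq (ratio (B 1) (2 - Z.of_nat i)) l).
  { induction i as [|i [l IH]].
    - exists 0. apply lim_zero. intro n. pose proof (B1_le n). lia.
    - destruct (CV_A1 (2 - Z.of_nat (Datatypes.S i) - 0)%Z) as [la La].
      exists ((la + l) / 2). eapply split_k; [exact HG|exact HH|exact La|].
      replace (2 - Z.of_nat (Datatypes.S i) - -1)%Z with (2 - Z.of_nat i)%Z by lia. exact IH. }
  intro k. destruct (Z_le_gt_dec 2 k) as [Hk|Hk].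
  - exists 0. apply lim_zero. intro n. pose proof (B1_le n). lia.
  - destruct (K (Z.to_nat (2 - k))) as [l L]. exists l.
    replace k with (2 - Z.of_nat (Z.to_nat (2 - k)))%Z by lia. exact L.
Qed.

Lemma CV_all m : CV (A m) /\ CV (B m).
Proof.
  induction m as [m IH] using lt_wf_ind.
  destruct (Nat.Even_or_Odd m) as [[u ->]|[u ->]].
  - destruct u as [|u'].
    + split; [apply (CV_const _ 0); apply A0 | apply (CV_const _ 0); apply B0].
    + set (u := Datatypes.S u'). destruct (IH u ltac:(unfold u; lia)) as [CA CB]. split.
      * apply (CV_split _ (A u) (B u) 0 0); auto.
        -- intro j. rewrite A_even_e. lia.
        -- intro j. rewrite A_even_o. lia.
      * apply (CV_split _ (A u) (B u) (par u) (- par u)); auto.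
        -- intro j. rewrite B_even_e. lia.
        -- intro j. rewrite B_even_o. lia.
  - destruct u as [|u'].
    + split; [exact CV_A1 | exact CV_B1].
    + set (u := Datatypes.S u'). destruct (IH u ltac:(unfold u; lia)) as [CA CB].
      destruct (IH (u + 1)%nat ltac:(unfold u; lia)) as [CA' CB']. split.
      * apply (CV_split _ (A u) (B u) (par u) (1 - par u)); auto.
        -- intro j. rewrite A_odd_e. lia.
        -- intro j. rewrite A_odd_o. lia.
      * apply (CV_split _ (A (u + 1)) (B (u + 1)) 0 (-1)); auto.
        -- intro j. rewrite B_odd_e. lia.
        -- intro j. rewrite B_odd_o. lia.
Qed.

Lemma dens_nonneg F k : CV F -> 0 <= densF F k.
Proof.
  intro C. destruct (C k) as [l L]. rewrite (dens_of _ _ _ L).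
  assert (H := is_lim_seq_le (fun _ => 0) (ratio F k) 0 l).
  simpl in H. apply H; [|apply is_lim_seq_const|exact L].
  intro N. unfold ratio, Rdiv. destruct N as [|N].
  - simpl. lra.
  - apply Rmult_le_pos; [apply pos_INR|]. left. apply Rinv_0_lt_compat, lt_0_INR. lia.
Qed.

Lemma indic_sum (v : Z) (g : nat -> Z) (M : nat) :
  (forall a b, g a = g b -> a = b) ->
  sum_f_R0 (fun n => if Z.eqb v (g n) then 1 else 0) M <= 1 /\
  ((forall n, (n <= M)%nat -> v <> g n) -> sum_f_R0 (fun n => if Z.eqb v (g n) then 1 else 0) M = 0).
Proof.
  intro Hinj. induction M as [|M [IH1 IH2]].
  - simpl. destruct (Z.eqb_spec v (g 0%nat)); split; try lra.
    intro H. exfalso. apply (H 0%nat); auto.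
  - simpl. destruct (Z.eqb_spec v (g (Datatypes.S M))) as [E|E].
    + rewrite IH2; [split; [lra|]|].
      * intro H. exfalso. apply (H (Datatypes.S M)); auto.
      * intros n Hn Hv. rewrite Hv in E. apply Hinj in E. lia.
    + split; [lra|]. intro H. rewrite IH2; [ring|]. intros n Hn. apply H. lia.
Qed.

Lemma cnt_sum F g M N : (forall a b, g a = g b -> a = b) ->
  sum_f_R0 (fun n => INR (cntZ F (g n) N)) M <= INR N.
Proof.
  intro Hinj. induction N as [|N IH].
  - unfold cntZ. simpl. rewrite sum_eq_R0; [lra|]. intros; reflexivity.
  - assert (E : forall n, INR (cntZ F (g n) (Datatypes.S N)) =
               INR (cntZ F (g n) N) + (if Z.eqb (F N) (g n) then 1 else 0)).
    { intro n. unfold cntZ. rewrite cnt_S, plus_INR. destruct (Z.eqb (F N) (g n)); reflexivity. }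
    rewrite (sum_eq _ _ _ (fun n _ => E n)).
    rewrite sum_plus. destruct (indic_sum (F N) g M Hinj) as [H1 _].
    rewrite S_INR. lra.
Qed.

Lemma lim_sum F g M : CV F ->
  is_lim_seq (fun N => sum_f_R0 (fun n => ratio F (g n) N) M) (sum_f_R0 (fun n => densF F (g n)) M).
Proof.
  intro C. induction M as [|M IH].
  - simpl. destruct (C (g 0%nat)) as [l L]. rewrite (dens_of _ _ _ L). exact L.
  - simpl. destruct (C (g (Datatypes.S M))) as [l L]. rewrite (dens_of _ _ _ L).
    apply is_lim_seq_plus'; assumption.
Qed.

Lemma dens_sum F g M : CV F -> (forall a b, g a = g b -> a = b) ->
  sum_f_R0 (fun n => densF F (g n)) M <= 1.
Proof.
  intros C Hinj.
  assert (H := fun Hle => is_lim_seq_le _ (fun _ => 1) _ 1 Hle (lim_sum F g M C) (is_lim_seq_const 1)).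
  simpl in H. apply H. intro N.
  assert (E : sum_f_R0 (fun n => ratio F (g n) N) M =
              sum_f_R0 (fun n => INR (cntZ F (g n) N)) M * / INR N).
  { unfold ratio, Rdiv. rewrite Rmult_comm, scal_sum. reflexivity. }
  rewrite E. pose proof (cnt_sum F g M N Hinj) as Hs.
  destruct N as [|N].
  - change (INR 0%nat) with 0 in Hs. pose proof (cond_pos_sum (fun n => INR (cntZ F (g n) 0%nat)) M (fun n => pos_INR _)) as P.
    assert (sum_f_R0 (fun n => INR (cntZ F (g n) 0)) M = 0) as -> by lra. lra.
  - assert (0 < INR (Datatypes.S N)) by (apply lt_0_INR; lia).
    apply (Rmult_le_reg_r (INR (Datatypes.S N))); [lra|].
    rewrite Rmult_assoc, Rinv_l by lra. lra.
Qed.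

Lemma ex_series_bnd (a : nat -> R) : (forall n, 0 <= a n) -> (forall M, sum_f_R0 a M <= 1) -> ex_series a.
Proof.
  intros Hp Hb.
  destruct (ex_finite_lim_seq_incr (sum_n a) 1) as [l L].
  - intro n. rewrite !sum_n_Reals. simpl. specialize (Hp (Datatypes.S n)). lra.
  - intro n. rewrite sum_n_Reals. apply Hb.
  - exists l. exact L.
Qed.

Definition Zsumm (f : Z -> R) : Prop :=
  ex_series (fun n => Rabs (f (Z.of_nat n))) /\ ex_series (fun n => Rabs (f (- Z.of_nat (Datatypes.S n))%Z)).
Definition good (p : Z -> R) : Prop := (forall k, 0 <= p k) /\ Zsumm p.

Lemma good_dens F : CV F -> good (densF F).
Proof.
  intro C. assert (Hp : forall k, 0 <= densF F k) by (intro; apply dens_nonneg, C).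
  split; [exact Hp|]. split.
  - apply ex_series_bnd.
    + intro. apply Rabs_pos.
    + intro M. rewrite (sum_eq _ (fun n => densF F (Z.of_nat n))).
      * apply dens_sum; [exact C|]. intros. lia.
      * intros. apply Rabs_right. apply Rle_ge, Hp.
  - apply ex_series_bnd.
    + intro. apply Rabs_pos.
    + intro M. rewrite (sum_eq _ (fun n => densF F (- Z.of_nat (Datatypes.S n))%Z)).
      * apply dens_sum; [exact C|]. intros. lia.
      * intros. apply Rabs_right. apply Rle_ge, Hp.
Qed.

Lemma Zsumm_ex f : Zsumm f ->
  ex_series (fun n => f (Z.of_nat n)) /\ ex_series (fun n => f (- Z.of_nat (Datatypes.S n))%Z).
Proof. intros [H1 H2]. split; apply ex_series_Rabs; assumption. Qed.

Lemma Zsum_ext f g : (forall k, f k = g k) -> Zsum f = Zsum g.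
Proof. intro H. unfold Zsum. rewrite (Series_ext _ _ (fun n => H _)), (Series_ext _ _ (fun n => H _)). reflexivity. Qed.

Lemma Zsum_plus f g : Zsumm f -> Zsumm g -> Zsum (fun k => f k + g k) = Zsum f + Zsum g.
Proof.
  intros Hf Hg. apply Zsumm_ex in Hf as [F1 F2]. apply Zsumm_ex in Hg as [G1 G2].
  unfold Zsum. rewrite (Series_plus _ _ F1 G1), (Series_plus _ _ F2 G2). ring.
Qed.

Lemma Zsum_scal c f : Zsum (fun k => c * f k) = c * Zsum f.
Proof. unfold Zsum. rewrite !Series_scal_l. ring. Qed.

Lemma Zsumm_mul p h M : good p -> (forall k, Rabs (h k) <= M) -> Zsumm (fun k => p k * h k).
Proof.
  intros [Hp [H1 H2]] Hh. split.
  - apply (@ex_series_le R_AbsRing R_CompleteNormedModule _ (fun n => M * Rabs (p (Z.of_nat n)))).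
    + intro n. change (norm (Rabs (p (Z.of_nat n) * h (Z.of_nat n)))) with
        (Rabs (Rabs (p (Z.of_nat n) * h (Z.of_nat n)))).
      rewrite Rabs_Rabsolu, Rabs_mult. rewrite Rmult_comm. apply Rmult_le_compat_r; [apply Rabs_pos|apply Hh].
    + apply (ex_series_scal_l M _ H1).
  - apply (@ex_series_le R_AbsRing R_CompleteNormedModule _ (fun n => M * Rabs (p (- Z.of_nat (Datatypes.S n))%Z))).
    + intro n. change (norm (Rabs (p (- Z.of_nat (Datatypes.S n))%Z * h (- Z.of_nat (Datatypes.S n))%Z))) with
        (Rabs (Rabs (p (- Z.of_nat (Datatypes.S n))%Z * h (- Z.of_nat (Datatypes.S n))%Z))).
      rewrite Rabs_Rabsolu, Rabs_mult. rewrite Rmult_comm. apply Rmult_le_compat_r; [apply Rabs_pos|apply Hh].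
    + apply (ex_series_scal_l M _ H2).
Qed.

Lemma Zsumm_shift f : Zsumm f -> Zsumm (fun k => f (k - 1)%Z) /\ Zsumm (fun k => f (k + 1)%Z).
Proof.
  intros [H1 H2]. split; split.
  - apply ex_series_incr_1.
    apply (ex_series_ext (fun n => Rabs (f (Z.of_nat n)))); [|exact H1].
    intro n. f_equal; f_equal; lia.
  - apply ex_series_incr_1 in H2.
    apply (ex_series_ext (fun n => Rabs (f (- Z.of_nat (Datatypes.S (Datatypes.S n)))%Z))); [|exact H2].
    intro n. f_equal; f_equal; lia.
  - apply ex_series_incr_1 in H1.
    apply (ex_series_ext (fun n => Rabs (f (Z.of_nat (Datatypes.S n))))); [|exact H1].
    intro n. f_equal; f_equal; lia.
  - apply ex_series_incr_1.
    apply (ex_series_ext (fun n => Rabs (f (- Z.of_nat (Datatypes.S n))%Z))); [|exact H2].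
    intro n. f_equal; f_equal; lia.
Qed.

Lemma Zsum_shift1 f : Zsumm f -> Zsum (fun k => f (k - 1)%Z) = Zsum f.
Proof.
  intro Hf. destruct (Zsumm_shift f Hf) as [Hs _].
  apply Zsumm_ex in Hs as [S1 S2]. destruct (Zsumm_ex f Hf) as [F1 F2].
  unfold Zsum.
  rewrite (Series_incr_1 _ S1).
  rewrite (Series_incr_1 _ F2).
  rewrite (Series_ext (fun k => f (Z.of_nat (Datatypes.S k) - 1)%Z) (fun n => f (Z.of_nat n)))
    by (intro n; f_equal; lia).
  rewrite (Series_ext (fun n => f (- Z.of_nat (Datatypes.S n) - 1)%Z)
                      (fun k => f (- Z.of_nat (Datatypes.S (Datatypes.S k)))%Z))
    by (intro n; f_equal; lia).
  replace (Z.of_nat 0 - 1)%Z with (- Z.of_nat 1)%Z by reflexivity. ring.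
Qed.

Lemma Zsum_shiftm1 f : Zsumm f -> Zsum (fun k => f (k + 1)%Z) = Zsum f.
Proof.
  intro Hf. destruct (Zsumm_shift f Hf) as [_ Hs].
  rewrite <- (Zsum_shift1 _ Hs). apply Zsum_ext. intro k. f_equal; lia.
Qed.

Definition c3 (c : Z) : Prop := c = (-1)%Z \/ c = 0%Z \/ c = 1%Z.

Lemma Zsum_shift f c : Zsumm f -> c3 c ->
  Zsum (fun k => f (k - c)%Z) = Zsum f /\ Zsumm (fun k => f (k - c)%Z).
Proof.
  intros Hf [E|[E|E]]; subst c.
  - destruct (Zsumm_shift f Hf) as [_ Hs]. split.
    + rewrite <- (Zsum_shiftm1 f Hf). apply Zsum_ext. intro k. f_equal; lia.
    + destruct Hs as [H1 H2]. split.
      * apply (ex_series_ext _ _ (fun n => f_equal (fun z => Rabs (f z)) (eq_sym (Z.sub_opp_r (Z.of_nat n) 1)))); exact H1.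
      * apply (ex_series_ext _ _ (fun n => f_equal (fun z => Rabs (f z)) (eq_sym (Z.sub_opp_r _ 1)))); exact H2.
  - split.
    + apply Zsum_ext. intro k. f_equal; lia.
    + destruct Hf as [H1 H2]. split.
      * apply (ex_series_ext _ _ (fun n => f_equal (fun z => Rabs (f z)) (eq_sym (Z.sub_0_r (Z.of_nat n))))); exact H1.
      * apply (ex_series_ext _ _ (fun n => f_equal (fun z => Rabs (f z)) (eq_sym (Z.sub_0_r _)))); exact H2.
  - split; [apply Zsum_shift1; exact Hf | apply Zsumm_shift; exact Hf].
Qed.

Lemma Zsumm_scal c f : Zsumm f -> Zsumm (fun k => c * f k).
Proof.
  intros [H1 H2]. split.
  - apply (ex_series_ext (fun n => Rabs c * Rabs (f (Z.of_nat n)))).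
    + intro n. rewrite Rabs_mult. reflexivity.
    + apply (ex_series_scal_l (Rabs c) _ H1).
  - apply (ex_series_ext (fun n => Rabs c * Rabs (f (- Z.of_nat (Datatypes.S n))%Z))).
    + intro n. rewrite Rabs_mult. reflexivity.
    + apply (ex_series_scal_l (Rabs c) _ H2).
Qed.

Lemma abs_cos x : Rabs (cos x) <= 1.
Proof. apply Rabs_le. pose proof (COS_bound x). lra. Qed.
Lemma abs_sin x : Rabs (sin x) <= 1.
Proof. apply Rabs_le. pose proof (SIN_bound x). lra. Qed.

Lemma fourier_shift p c th : good p -> c3 c ->
  fourier (fun k => p (k - c)%Z) th = Cmult (e (IZR c * th)) (fourier p th).
Proof.
  intros Gp Hc.
  assert (SC : Zsumm (fun k => p k * cos (IZR k * th))) by (apply (Zsumm_mul p _ 1 Gp); intro; apply abs_cos).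
  assert (SS : Zsumm (fun k => p k * sin (IZR k * th))) by (apply (Zsumm_mul p _ 1 Gp); intro; apply abs_sin).
  set (a := IZR c * th).
  pose (psi1 := fun j => p j * (cos (IZR j * th) * cos a - sin (IZR j * th) * sin a)).
  pose (psi2 := fun j => p j * (sin (IZR j * th) * cos a + cos (IZR j * th) * sin a)).
  assert (P1 : Zsumm psi1).
  { apply (Zsumm_mul p _ 2 Gp). intro k.
    eapply Rle_trans; [apply Rabs_triang|]. rewrite Rabs_Ropp, !Rabs_mult.
    pose proof (abs_cos (IZR k * th)). pose proof (abs_cos a).
    pose proof (abs_sin (IZR k * th)). pose proof (abs_sin a).
    pose proof (Rabs_pos (cos (IZR k * th))). pose proof (Rabs_pos (cos a)).
    pose proof (Rabs_pos (sin (IZR k * th))). pose proof (Rabs_pos (sin a)). nra. }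
  assert (P2 : Zsumm psi2).
  { apply (Zsumm_mul p _ 2 Gp). intro k.
    eapply Rle_trans; [apply Rabs_triang|]. rewrite !Rabs_mult.
    pose proof (abs_cos (IZR k * th)). pose proof (abs_cos a).
    pose proof (abs_sin (IZR k * th)). pose proof (abs_sin a).
    pose proof (Rabs_pos (cos (IZR k * th))). pose proof (Rabs_pos (cos a)).
    pose proof (Rabs_pos (sin (IZR k * th))). pose proof (Rabs_pos (sin a)). nra. }
  assert (E1 : Zsum (fun k => p (k - c)%Z * cos (IZR k * th)) = Zsum (fun k => psi1 (k - c)%Z)).
  { apply Zsum_ext. intro k. unfold psi1. rewrite <- cos_plus. f_equal. f_equal.
    unfold a. rewrite minus_IZR. ring. }
  assert (E2 : Zsum (fun k => p (k - c)%Z * sin (IZR k * th)) = Zsum (fun k => psi2 (k - c)%Z)).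
  { apply Zsum_ext. intro k. unfold psi2. rewrite <- sin_plus. f_equal. f_equal.
    unfold a. rewrite minus_IZR. ring. }
  rewrite (proj1 (Zsum_shift _ c P1 Hc)) in E1.
  rewrite (proj1 (Zsum_shift _ c P2 Hc)) in E2.
  assert (F1 : Zsum psi1 = cos a * Zsum (fun k => p k * cos (IZR k * th)) +
                           - sin a * Zsum (fun k => p k * sin (IZR k * th))).
  { rewrite <- !Zsum_scal. rewrite <- Zsum_plus by (apply Zsumm_scal; assumption).
    apply Zsum_ext. intro k. unfold psi1. ring. }
  assert (F2 : Zsum psi2 = cos a * Zsum (fun k => p k * sin (IZR k * th)) +
                           sin a * Zsum (fun k => p k * cos (IZR k * th))).
  { rewrite <- !Zsum_scal. rewrite <- Zsum_plus by (apply Zsumm_scal; assumption).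
    apply Zsum_ext. intro k. unfold psi2. ring. }
  unfold fourier, e, Cmult. simpl. rewrite E1, E2, F1, F2. f_equal; ring.
Qed.

Lemma fourier_ext p q th : (forall k, p k = q k) -> fourier p th = fourier q th.
Proof.
  intro H. unfold fourier.
  rewrite (Zsum_ext (fun k => p k * cos (IZR k * th)) (fun k => q k * cos (IZR k * th))) by (intro; rewrite H; reflexivity).
  rewrite (Zsum_ext (fun k => p k * sin (IZR k * th)) (fun k => q k * sin (IZR k * th))) by (intro; rewrite H; reflexivity).
  reflexivity.
Qed.

Lemma good_shift p c : good p -> c3 c -> good (fun k => p (k - c)%Z).
Proof.
  intros [Hp Hs] Hc. split; [intro; apply Hp|]. apply (proj2 (Zsum_shift _ c Hs Hc)).
Qed.

Lemma fourier_half u v th : good u -> good v ->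
  fourier (fun k => (u k + v k) / 2) th = Cmult (/ RtoC 2) (Cplus (fourier u th) (fourier v th)).
Proof.
  intros Gu Gv.
  assert (U1 : Zsumm (fun k => u k * cos (IZR k * th))) by (apply (Zsumm_mul u _ 1 Gu); intro; apply abs_cos).
  assert (U2 : Zsumm (fun k => u k * sin (IZR k * th))) by (apply (Zsumm_mul u _ 1 Gu); intro; apply abs_sin).
  assert (V1 : Zsumm (fun k => v k * cos (IZR k * th))) by (apply (Zsumm_mul v _ 1 Gv); intro; apply abs_cos).
  assert (V2 : Zsumm (fun k => v k * sin (IZR k * th))) by (apply (Zsumm_mul v _ 1 Gv); intro; apply abs_sin).
  unfold fourier.
  rewrite (Zsum_ext (fun k => (u k + v k) / 2 * cos (IZR k * th))
             (fun k => / 2 * (u k * cos (IZR k * th) + v k * cos (IZR k * th)))) by (intro; unfold Rdiv; ring).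
  rewrite (Zsum_ext (fun k => (u k + v k) / 2 * sin (IZR k * th))
             (fun k => / 2 * (u k * sin (IZR k * th) + v k * sin (IZR k * th)))) by (intro; unfold Rdiv; ring).
  rewrite !Zsum_scal, !Zsum_plus by assumption.
  unfold Cmult, Cplus, Cinv, RtoC. simpl. f_equal; field.
Qed.

Lemma fourier_comb p g h c1 c2 th : good g -> good h -> c3 c1 -> c3 c2 ->
  (forall k, p k = (g (k - c1)%Z + h (k - c2)%Z) / 2) ->
  fourier p th = Cmult (/ RtoC 2) (Cplus (Cmult (e (IZR c1 * th)) (fourier g th))
                                         (Cmult (e (IZR c2 * th)) (fourier h th))).
Proof.
  intros Gg Gh H1 H2 Hp. rewrite (fourier_ext _ _ th Hp).
  rewrite fourier_half by (apply good_shift; assumption).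
  rewrite !fourier_shift by assumption. reflexivity.
Qed.

Lemma rec_gen F G H c1 c2 th :
  (forall j, F (2 * j)%nat = (G j + c1)%Z) -> (forall j, F (2 * j + 1)%nat = (H j + c2)%Z) ->
  CV G -> CV H -> c3 c1 -> c3 c2 ->
  fourier (densF F) th = Cmult (/ RtoC 2) (Cplus (Cmult (e (IZR c1 * th)) (fourier (densF G) th))
                                                 (Cmult (e (IZR c2 * th)) (fourier (densF H) th))).
Proof.
  intros HG HH CG CH H1 H2. apply fourier_comb; try assumption; try (apply good_dens; assumption).
  intro k. apply dens_split; assumption.
Qed.

Lemma alpha_eq m th : alpha m th = fourier (densF (A m)) th.
Proof. reflexivity. Qed.
Lemma beta_eq m th : beta m th = fourier (densF (B m)) th.
Proof. reflexivity. Qed.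

Lemma c3_par u : c3 (par u).
Proof. unfold c3, par. destruct (Nat.odd u); auto. Qed.
Lemma c3_mpar u : c3 (- par u).
Proof. unfold c3, par. destruct (Nat.odd u); auto. Qed.
Lemma c3_1mpar u : c3 (1 - par u).
Proof. unfold c3, par. destruct (Nat.odd u); auto. Qed.
Lemma c3_0 : c3 0.
Proof. unfold c3; auto. Qed.
Lemma c3_m1 : c3 (-1).
Proof. unfold c3; auto. Qed.

Lemma RA_even u th : alpha (2 * u) th =
  Cmult (/ RtoC 2) (Cplus (Cmult (e (IZR 0 * th)) (alpha u th)) (Cmult (e (IZR 0 * th)) (beta u th))).
Proof.
  destruct (CV_all u) as [CA CB]. rewrite !alpha_eq, beta_eq.
  apply rec_gen; auto using c3_0.
  - intro j. rewrite A_even_e. lia.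
  - intro j. rewrite A_even_o. lia.
Qed.

Lemma RB_even u th : beta (2 * u) th =
  Cmult (/ RtoC 2) (Cplus (Cmult (e (IZR (par u) * th)) (alpha u th)) (Cmult (e (IZR (- par u) * th)) (beta u th))).
Proof.
  destruct (CV_all u) as [CA CB]. rewrite !alpha_eq, !beta_eq.
  apply rec_gen; auto using c3_par, c3_mpar.
  - intro j. rewrite B_even_e. lia.
  - intro j. rewrite B_even_o. lia.
Qed.

Lemma RA_odd u th : alpha (2 * u + 1) th =
  Cmult (/ RtoC 2) (Cplus (Cmult (e (IZR (par u) * th)) (alpha u th)) (Cmult (e (IZR (1 - par u) * th)) (beta u th))).
Proof.
  destruct (CV_all u) as [CA CB]. rewrite !alpha_eq, !beta_eq.
  apply rec_gen; auto using c3_par, c3_1mpar.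
  - intro j. rewrite A_odd_e. lia.
  - intro j. rewrite A_odd_o. lia.
Qed.

Lemma RB_odd u th : beta (2 * u + 1) th =
  Cmult (/ RtoC 2) (Cplus (Cmult (e (IZR 0 * th)) (alpha (u + 1) th)) (Cmult (e (IZR (-1) * th)) (beta (u + 1) th))).
Proof.
  destruct (CV_all (u + 1)) as [CA CB]. rewrite !alpha_eq, !beta_eq.
  apply rec_gen; auto using c3_0, c3_m1.
  - intro j. rewrite B_odd_e. lia.
  - intro j. rewrite B_odd_o. lia.
Qed.

Lemma e0 th : e (IZR 0 * th) = RtoC 1.
Proof. unfold e, RtoC. rewrite Rmult_0_l, cos_0, sin_0. reflexivity. Qed.
Lemma e1 th : e (IZR 1 * th) = e th.
Proof. rewrite Rmult_1_l. reflexivity. Qed.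
Lemma e_ne0 th : e th <> RtoC 0.
Proof.
  unfold e, RtoC. intro E. injection E as E1 E2. pose proof (sin2_cos2 th). rewrite E1, E2 in H. unfold Rsqr in H. lra.
Qed.
Lemma em1 th : e (IZR (-1) * th) = Cinv (e th).
Proof.
  unfold e, Cinv. simpl. replace (-1 * th) with (- th) by ring.
  rewrite cos_neg, sin_neg.
  assert (Hs : cos th ^ 2 + sin th ^ 2 = 1) by (pose proof (sin2_cos2 th) as H; unfold Rsqr in H; nra).
  simpl in Hs. rewrite Hs. f_equal; field.
Qed.
Lemma e_neg th : e (- th) = Cinv (e th).
Proof. rewrite <- em1. f_equal. ring. Qed.
Lemma e2 th : e (2 * th) = Cmult (e th) (e th).
Proof. unfold e, Cmult. simpl. rewrite cos_2a, sin_2a. f_equal; ring. Qed.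

Lemma par_even t : par (2 * t) = 0%Z.
Proof. unfold par. rewrite odd_2. reflexivity. Qed.
Lemma par_odd t : par (2 * t + 1) = 1%Z.
Proof. unfold par. rewrite odd_21. reflexivity. Qed.

Lemma Series_single (a : nat -> R) : (forall n, a (Datatypes.S n) = 0) -> Series a = a 0%nat.
Proof.
  intro H. apply is_series_unique. change (is_lim_seq (sum_n a) (a 0%nat)).
  apply (is_lim_seq_ext (fun _ => a 0%nat)); [|apply is_lim_seq_const].
  intro N. rewrite sum_n_Reals. induction N as [|N IH]; [reflexivity|].
  simpl. rewrite <- IH, H. ring.
Qed.

Lemma fourier_delta F th : (forall n, F n = 0%Z) -> fourier (densF F) th = RtoC 1.
Proof.
  intro H0.
  assert (D : forall k, densF F k = if Z.eqb k 0 then 1 else 0).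
  { intro k. destruct (Z.eqb_spec k 0) as [->|Hk].
    - apply dens_of. apply lim_one. exact H0.
    - apply dens_of. apply lim_zero. intro n. rewrite H0. auto. }
  unfold fourier, Zsum, RtoC.
  rewrite !(Series_single (fun n => densF F (- Z.of_nat (Datatypes.S n))%Z * _)) by
    (intro n; rewrite D; simpl; ring).
  rewrite !(Series_single (fun n => densF F (Z.of_nat n) * _)) by
    (intro n; rewrite D; simpl; ring).
  rewrite !D. simpl. rewrite Rmult_0_l, cos_0, sin_0. f_equal; ring.
Qed.

Lemma alpha0 th : alpha 0 th = RtoC 1.
Proof. rewrite alpha_eq. apply fourier_delta. apply A0. Qed.
Lemma beta0 th : beta 0 th = RtoC 1.
Proof. rewrite beta_eq. apply fourier_delta. apply B0. Qed.

Lemma par_even2 t : par (2 * t + 2) = 0%Z.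
Proof. unfold par. replace (2 * t + 2)%nat with (2 * (t + 1))%nat by lia. rewrite odd_2. reflexivity. Qed.

Lemma two_minus_ne0 th : Cminus (RtoC 2) (Cinv (e th)) <> RtoC 0.
Proof.
  rewrite <- em1. unfold e, RtoC, Cminus, Cplus, Copp. intro E. injection E as E1 E2.
  pose proof (COS_bound (IZR (-1) * th)). lra.
Qed.

Ltac unf := cbv beta iota zeta delta [S mv D0 D1 half_mx nth].
Ltac ez := rewrite ?par_even, ?par_odd, ?par_even2; cbn [Z.opp Z.sub Z.add Z.pos_sub];
  rewrite ?e0, ?e1, ?em1.

Theorem proposition3p3 :
  (forall (t : nat) (th : R) (i : nat), (i < 6)%nat ->
      S (2 * t) th i = mv (D0 th) (S t th) i /\
      S (2 * t + 1) th i = mv (D1 th) (S t th) i) /\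
  (forall (th : R) (i : nat), (i < 6)%nat -> S 0 th i = S0_explicit th i) /\
  (forall (t : nat) (th : R),
      alpha (8 * t) th = alpha (4 * t) th /\
      alpha (4 * t) th = beta (8 * t) th /\
      beta (8 * t) th = beta (4 * t) th).
Proof.
  split; [|split].
  - intros t th i Hi. pose proof (e_ne0 th) as Hx.
    destruct i as [|[|[|[|[|[|i]]]]]]; [| | | | | |lia]; unf; split.
    + rewrite (RA_even (2 * t)). ez. field. auto.
    + rewrite (RA_even (2 * t + 1)). ez. field. auto.
    + rewrite (RB_even (2 * t)). ez. field. auto.
    + rewrite (RB_even (2 * t + 1)). ez. field. auto.
    + rewrite (RA_odd (2 * t)). ez. field. auto.
    + rewrite (RA_odd (2 * t + 1)). ez. field. auto.
    + rewrite (RB_odd (2 * t)). ez. field. auto.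
    + rewrite (RB_odd (2 * t + 1)). replace (2 * t + 1 + 1)%nat with (2 * t + 2)%nat by lia. ez. field. auto.
    + replace (2 * (2 * t) + 2)%nat with (2 * (2 * t + 1))%nat by lia.
      rewrite (RA_even (2 * t + 1)). ez. field. auto.
    + replace (2 * (2 * t + 1) + 2)%nat with (2 * (2 * t + 2))%nat by lia.
      rewrite (RA_even (2 * t + 2)). ez. field. auto.
    + replace (2 * (2 * t) + 2)%nat with (2 * (2 * t + 1))%nat by lia.
      rewrite (RB_even (2 * t + 1)). ez. field. auto.
    + replace (2 * (2 * t + 1) + 2)%nat with (2 * (2 * t + 2))%nat by lia.
      rewrite (RB_even (2 * t + 2)). ez. field. auto.
  - intros th i Hi. pose proof (e_ne0 th) as Hx. pose proof (two_minus_ne0 th) as Hy.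
    assert (Hz : Cminus (Cmult (RtoC 2) (e th)) (RtoC 1) <> RtoC 0).
    { intro Z. apply Hy. replace (Cminus (RtoC 2) (Cinv (e th))) with
        (Cmult (Cminus (Cmult (RtoC 2) (e th)) (RtoC 1)) (Cinv (e th))) by (field; exact Hx).
      rewrite Z. ring. }
    assert (Ha1 : alpha 1 th = Cmult (/ RtoC 2) (Cplus (e th) (RtoC 1))).
    { pose proof (RA_odd 0 th) as H. change (2 * 0 + 1)%nat with 1%nat in H. rewrite H.
      change (par 0) with 0%Z. cbn [Z.sub].
      rewrite e0, e1, alpha0, beta0. field. }
    assert (Hb1 : beta 1 th = Cdiv (alpha 1 th) (Cminus (RtoC 2) (Cinv (e th)))).
    { pose proof (RB_odd 0 th) as H. change (2 * 0 + 1)%nat with 1%nat in H.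
      change (0 + 1)%nat with 1%nat in H. rewrite e0, em1 in H.
      assert (E : Cmult (beta 1 th) (Cminus (RtoC 2) (Cinv (e th))) = alpha 1 th).
      { transitivity (Cminus (Cmult (RtoC 2) (beta 1 th)) (Cmult (Cinv (e th)) (beta 1 th))); [ring|].
        rewrite H at 1. field. exact Hx. }
      rewrite <- E. field. repeat split; cbv beta; assumption. }
    destruct i as [|[|[|[|[|[|i]]]]]]; [| | | | | |lia]; unfold S, S0_explicit; rewrite ?e_neg.
    + apply alpha0.
    + apply beta0.
    + change (2 * 0 + 1)%nat with 1%nat. rewrite Ha1. field.
    + change (2 * 0 + 1)%nat with 1%nat. rewrite Hb1, Ha1. field. repeat split; cbv beta; assumption.
    + change (2 * 0 + 2)%nat with (2 * 1)%nat. rewrite (RA_even 1). rewrite e0, Hb1, Ha1.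
      field. repeat split; cbv beta; assumption.
    + change (2 * 0 + 2)%nat with (2 * 1)%nat. rewrite (RB_even 1). change (par 1) with 1%Z.
      cbn [Z.opp]. rewrite e1, em1, e2, Hb1, Ha1. field. repeat split; cbv beta; assumption.
  - intros t th.
    assert (H4 : alpha (4 * t) th = beta (4 * t) th).
    { replace (4 * t)%nat with (2 * (2 * t))%nat by lia.
      rewrite (RA_even (2 * t)), (RB_even (2 * t)). ez. reflexivity. }
    assert (H8a : alpha (8 * t) th = alpha (4 * t) th).
    { replace (8 * t)%nat with (2 * (4 * t))%nat by lia.
      rewrite (RA_even (4 * t)). rewrite <- H4. ez. field. }
    assert (H8b : beta (8 * t) th = alpha (4 * t) th).
    { replace (8 * t)%nat with (2 * (4 * t))%nat by lia.
      rewrite (RB_even (4 * t)). replace (4 * t)%nat with (2 * (2 * t))%nat by lia.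
      rewrite par_even. replace (2 * (2 * t))%nat with (4 * t)%nat by lia. rewrite <- H4. ez. field. }
    split; [exact H8a|split]; [rewrite H8b; reflexivity|rewrite H8b; exact H4].
Qed.
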